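(* In the no-regret model with signal sets $S_i=A_i\sqcup\{\bot\}$, consider the following principal algorithm with hyperparameter $L$. For each agent $i=1,\dots,n$ and each $a_{-i}\in A_{-i}$: set $\mathbf{p}^1=\mathbf{1}\in\mathbb{R}^{A_i}$; for $\ell=1,\dots,L$ (one round $t$ each), set $P_i^t(\cdot)=\mathbf{p}^\ell[\cdot]$ and $P_j^t(a_j')=2\cdot\mathbb{1}[a_j'=a_j]$ for all $j\ne i$ (where $a_j$ is $j$'s action in $a_{-i}$), send signals $s_i^t=\bot$ and $s_j^t=a_j$ for $j\ne i$, observe $a^t$, and set $\mathbf{p}^{\ell+1}=\Pi_{\mathcal{P}_i}[\mathbf{p}^\ell-\eta\mathbf{e}_{a_i^t}]$ with $\eta=\sqrt{m_i/L}$ and $\mathcal{P}_i=\{\mathbf{p}\in[0,2]^{A_i}:\langle\mathbf{1},\mathbf{p}\rangle=m_i\}$; then set $\tilde U_i(\cdot,a_{-i})=-\frac1L\sum_{\ell=1}^L\mathbf{p}^\ell$. Output $\tilde U$. For an appropriate choice of $L$, this algorithm $\varepsilon$-learns any game in $\mathrm{poly}(M)/\varepsilon^2$ rounds.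
   Context: A normal-form game has agents $i\in[n]$, finite action sets $A_i$ with $|A_i|=m_i\ge2$, $A=\prod_iA_i$, $m=\max_i m_i$, $M=\prod_i m_i$, and unknown utilities $U_i:A\to[0,1]$. In each round $t\le T$ the principal chooses payments $P_i^t:A_i\to\mathbb{R}_+$ and sends each agent a signal $s_i^t$ from a finite set $S_i$; agent $i$'s utility that round is $U_i^t(a)=U_i(a)+P_i^t(a_i)$; agents choose actions and the principal observes $a^t$. No-regret model: there is a constant $C\le\mathrm{poly}(M)$ such that for every agent $i$, signal $s_i\in S_i$ and every $t\le T$, $\hat R_i(t,s_i):=\max_{a_i\in A_i}\sum_{\tau\le t,\,s_i^\tau=s_i}[U_i^\tau(a_i,a_{-i}^\tau)-U_i^\tau(a^\tau)]\le C\sqrt{T}$. $\Pi$ denotes Euclidean projection, $\mathbf{e}_a$ the unit vector. The principal $\varepsilon$-learns the game if it outputs $\tilde U_i:A\to\mathbb{R}$ such that there exist $W_i:A_{-i}\to\mathbb{R}$ with $|U_i(a)+W_i(a_{-i})-\tilde U_i(a)|\le\varepsilon$ for all $i$ and $a$. *)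

(* Defs.v *)
From HB Require Import structures.
From mathcomp Require Import all_boot all_order all_algebra.
From mathcomp Require Import reals.
From Stdlib Require Import ClassicalEpsilon.
Set Implicit Arguments. Unset Strict Implicit. Unset Printing Implicit Defensive.
Import Order.TTheory GRing.Theory Num.Theory.
Local Open Scope ring_scope.

Section Game.
Context (R : realType) (n : nat) (m : 'I_n -> nat).

(* Agent i's action set A_i is 'I_(m i); joint action profiles A = prod_i A_i. *)
Definition Prof := {dffun forall i : 'I_n, 'I_(m i)}.

Definition Mprod : nat := (\prod_(i < n) m i)%N.

Definition cast_act (i j : 'I_n) (e : i = j) (x : 'I_(m i)) : 'I_(m j) :=
  ecast k 'I_(m k) e x.

Definition upd (a : Prof) (i : 'I_n) (x : 'I_(m i)) : Prof :=
  @finfun _ (fun j => 'I_(m j))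
    (fun j => match i =P j with
              | ReflectT e => cast_act e x
              | ReflectF _ => a j end).

(* A phase of the algorithm is a pair (i, a_{-i}); a_{-i} is represented by
   the unique profile b with b_{-i} = a_{-i} and b_i = 0 (first action). *)
Definition Ph := {x : 'I_n * Prof | val (x.2 x.1) == 0%N}.

Local Notation vec i := {ffun 'I_(m i) -> R}.

Definition unitv (i : 'I_n) (a : 'I_(m i)) : vec i := [ffun x => (x == a)%:R].

Definition Pset (i : 'I_n) (p : vec i) : Prop :=
  (forall x, 0 <= p x <= 2) /\ \sum_x p x = (m i)%:R.

Definition sqdist (i : 'I_n) (p q : vec i) : R := \sum_x (p x - q x) ^+ 2.

(* Euclidean projection onto P_i (the minimizer of the distance, chosen by
   Hilbert's epsilon; it exists and is unique since P_i is nonempty, convex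
   and compact). *)
Definition proj (i : 'I_n) (v : vec i) : vec i :=
  epsilon (inhabits v)
    (fun q => Pset q /\ forall p, Pset p -> sqdist q v <= sqdist p v).

(* Projected gradient descent of the algorithm for agent i, with L steps.
   obs l = agent i's action in the l-th round (0-based) of the phase.
   gd L obs l = p^{l+1} in the paper's 1-based indexing. *)
Fixpoint gd (i : 'I_n) (L : nat) (obs : nat -> 'I_(m i)) (l : nat) : vec i :=
  match l with
  | 0 => [ffun => 1]
  | l'.+1 => proj [ffun x => gd L obs l' x - Num.sqrt ((m i)%:R / L%:R) * unitv (obs l') x]
  end.

(* Rounds are numbered 0,1,...,T-1; phases are run in the order of enum Ph,
   each for L consecutive rounds.  T = #|Ph| * L = L * sum_i |A_{-i}|. *)
Definition horizon (L : nat) : nat := (#|{: Ph}| * L)%N.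

Definition phase_at (L t : nat) : option Ph :=
  nth None [seq Some x | x <- enum {: Ph}] (t %/ L).

(* act t = the joint action observed in round t *)
Definition obs_of (L : nat) (act : nat -> Prof) (ph : Ph) : nat -> 'I_(m (val ph).1) :=
  fun l => act (enum_rank ph * L + l)%N (val ph).1.

Definition pvec (L : nat) (act : nat -> Prof) (ph : Ph) (l : nat) : vec (val ph).1 :=
  gd L (obs_of L act ph) l.

Definition pay (L : nat) (act : nat -> Prof) (t : nat) (j : 'I_n) (y : 'I_(m j)) : R :=
  match phase_at L t with
  | Some ph =>
      match j =P (val ph).1 with
      | ReflectT e => pvec L act ph (t %% L) (cast_act e y)
      | ReflectF _ => if y == (val ph).2 j then 2 else 0
      end
  | None => 0
  end.

(* Signal s_j^t in S_j = A_j + {bot}; None encodes bot. *)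
Definition signal (L : nat) (t : nat) (j : 'I_n) : option 'I_(m j) :=
  match phase_at L t with
  | Some ph => if j == (val ph).1 then None else Some ((val ph).2 j)
  | None => None
  end.

Definition util (U : 'I_n -> Prof -> R) (L : nat) (act : nat -> Prof)
  (t : nat) (j : 'I_n) (a : Prof) : R := U j a + @pay L act t j (a j).

(* No-regret model with constant C and horizon T: for every agent j, signal s,
   prefix length t <= T and deviation x,
   sum_{tau < t, s_j^tau = s} [U_j^tau(x, a_{-j}^tau) - U_j^tau(a^tau)] <= C sqrt T
   (this is the max over x of the regret being <= C sqrt T). *)
Definition no_regret (U : 'I_n -> Prof -> R) (L : nat) (act : nat -> Prof) (C : R) : Prop :=
  forall (j : 'I_n) (s : option 'I_(m j)) (t : nat), (t <= horizon L)%N ->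
  forall x : 'I_(m j),
    \sum_(tau < t | signal L tau j == s)
       (util U L act tau j (upd (act tau) x) - util U L act tau j (act tau))
    <= C * Num.sqrt (horizon L)%:R.

Definition output (L : nat) (act : nat -> Prof) (i : 'I_n) (a : Prof) : R :=
  match [pick ph : Ph | ((val ph).1 == i) &&
                        [forall j, (j != i) ==> ((val ph).2 j == a j)]] with
  | Some ph =>
      match (val ph).1 =P i with
      | ReflectT e =>
          - (L%:R)^-1 * \sum_(l < L) pvec L act ph l (cast_act (esym e) (a i))
      | ReflectF _ => 0
      end
  | None => 0
  end.

(* eps-learning: exists W_i : A_{-i} -> R (a function of a depending only on
   a_{-i}) with |U_i(a) + W_i(a_{-i}) - tilde U_i(a)| <= eps. *)
Definition eps_learns (eps : R) (U Ut : 'I_n -> Prof -> R) : Prop :=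
  exists W : 'I_n -> Prof -> R,
    (forall i (a a' : Prof), (forall j, j != i -> a j = a' j) -> W i a = W i a') /\
    (forall i (a : Prof), `|U i a + W i a - Ut i a| <= eps).

End Game.

(* Main.v *)
Require Import Defs.
From HB Require Import structures.
From mathcomp Require Import all_boot all_order all_algebra.
From mathcomp Require Import reals.
From Stdlib Require Import ClassicalEpsilon.
From mathcomp Require Import ring lra zify.
Import Order.TTheory GRing.Theory Num.Theory.
Local Open Scope ring_scope.
Set Implicit Arguments. Unset Strict Implicit. Unset Printing Implicit Defensive.

Section Proj.
Variables (R : realType) (n : nat) (m : 'I_n -> nat) (i : 'I_n).
Local Notation vec := {ffun 'I_(m i) -> R}.
Local Notation k := (m i).

Definition clamp (y : R) : R := if y < 0 then 0 else if 2 < y then 2 else y.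

Lemma clamp_bnd y : 0 <= clamp y <= 2.
Proof. rewrite /clamp; case: ltrP => h1; first lra. case: ltrP => h2; lra. Qed.

Lemma clamp_mono y d : 0 <= d -> clamp y - d <= clamp (y - d) <= clamp y.
Proof.
move=> hd; rewrite /clamp.
case: (ltrP y 0) => h1; case: (ltrP (y - d) 0) => h2; try case: (ltrP 2 y) => h3;
  try case: (ltrP 2 (y - d)) => h4; lra.
Qed.

Lemma clamp_var y w : 0 <= w <= 2 -> 0 <= (clamp y - y) * (w - clamp y).
Proof.
move=> hw; rewrite /clamp.
case: (ltrP y 0) => h1; [|case: (ltrP 2 y) => h2]; nra.
Qed.

Definition gsum (v : vec) (t : R) := \sum_x clamp (v x - t).

Lemma gsum_mono v t d : 0 <= d -> gsum v t - k%:R * d <= gsum v (t + d) <= gsum v t.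
Proof.
move=> hd; rewrite /gsum; apply/andP; split.
- have -> : k%:R * d = \sum_(x : 'I_k) d by rewrite sumr_const card_ord mulr_natl.
  rewrite -sumrB; apply: ler_sum => x _; rewrite opprD addrA.
  by have /andP[] := clamp_mono (v x - t) hd.
- apply: ler_sum => x _; rewrite opprD addrA.
  by have /andP[] := clamp_mono (v x - t) hd.
Qed.

Lemma le_sum_nonneg (f : 'I_k -> R) x : (forall y, 0 <= f y) -> f x <= \sum_y f y.
Proof.
move=> h; rewrite (bigD1 x) //= lerDl; apply: sumr_ge0 => y _; exact: h.
Qed.

Hypothesis k_gt0 : (0 < k)%N.

Lemma tau_exists (v : vec) : exists t, gsum v t = k%:R.
Proof.
pose B := \sum_x `|v x|.
have hB x : `|v x| <= B := @le_sum_nonneg (fun y => `|v y|) x (fun y => normr_ge0 _).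
have hk : 0 < k%:R :> R by rewrite ltr0n.
have glo : k%:R <= gsum v (- B - 2).
  rewrite /gsum; have -> : k%:R = \sum_(x : 'I_k) (1 : R) by rewrite sumr_const card_ord.
  apply: ler_sum => x _; rewrite /clamp.
  have := hB x; have := ler_norm (- v x); rewrite normrN => h1 h2.
  case: ltrP => h3; first lra. case: ltrP => h4; lra.
have ghi : gsum v B = 0.
  rewrite /gsum big1 // => x _; rewrite /clamp.
  have := hB x; have := ler_norm (v x) => h1 h2.
  case: ltrP => h3 //; case: ltrP => h4; lra.
pose S := (fun t : R => k%:R <= gsum v t) : classical_sets.set R.
have hS : classical_sets.has_sup S.
  split; first by exists (- B - 2).
  exists B => t St; rewrite leNgt; apply/negP => Bt.
  have hd : 0 <= t - B by lra.
  have := @gsum_mono v B (t - B) hd; rewrite (addrC B) subrK ghi /S.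
  move: St; rewrite /S /= => St; lra.
pose s := sup S.
exists s; apply/eqP; rewrite eq_le; apply/andP; split.
- rewrite leNgt; apply/negP => hlt.
  pose d := (gsum v s - k%:R) / k%:R.
  have hd : 0 < d by rewrite /d divr_gt0 // subr_gt0.
  have := @gsum_mono v s d (ltW hd) => /andP[h1 _].
  have Sd : S (s + d).
    rewrite /S /=; suff: k%:R * d = gsum v s - k%:R by lra.
    by rewrite /d mulrC divfK // gt_eqF.
  have := sup_upper_bound hS Sd; rewrite -/s; lra.
- rewrite leNgt; apply/negP => hlt.
  pose d := (k%:R - gsum v s) / k%:R.
  have hd : 0 < d by rewrite /d divr_gt0 // subr_gt0.
  have [e Se he] := sup_adherent hd hS.
  have hes : e <= s by apply: sup_upper_bound.
  have hd2 : 0 <= s - e by lra.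
  have := @gsum_mono v e (s - e) hd2; rewrite (addrC e) subrK => /andP[h1 _].
  have hkd : k%:R * d = k%:R - gsum v s by rewrite /d mulrC divfK // gt_eqF.
  move: Se; rewrite /S /= => Se.
  have : k%:R * (s - e) < k%:R * d by rewrite ltr_pM2l //; rewrite -/s in he; lra.
  lra.
Qed.

Lemma sqdist_split (p q v : vec) :
  sqdist q v = sqdist p v + sqdist q p + 2 * \sum_x (q x - p x) * (p x - v x).
Proof.
rewrite /sqdist big_distrr -!big_split /=; apply: eq_bigr => x _; ring.
Qed.

Lemma sqdistC (p q : vec) : sqdist p q = sqdist q p.
Proof. by rewrite /sqdist; apply: eq_bigr => x _; rewrite -sqrrN opprB. Qed.

Lemma sqdist_ge0 (p q : vec) : 0 <= sqdist p q.
Proof. by apply: sumr_ge0 => x _; rewrite sqr_ge0. Qed.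

Lemma proj_spec (v : vec) :
  Pset (proj v) /\ forall w, Pset w -> sqdist (proj v) w <= sqdist v w.
Proof.
have [t ht] := tau_exists v.
pose p : vec := [ffun x => clamp (v x - t)].
have Pp : Pset p.
  split; first by move=> x; rewrite ffunE clamp_bnd.
  by rewrite -ht /gsum; apply: eq_bigr => x _; rewrite ffunE.
have var w : Pset w -> 0 <= \sum_x (w x - p x) * (p x - v x).
  move=> [hw sw].
  have hz : \sum_x (w x - p x) = 0.
    by rewrite sumrB sw; case: Pp => _ ->; rewrite subrr.
  have -> : \sum_x (w x - p x) * (p x - v x) =
            \sum_x (clamp (v x - t) - (v x - t)) * (w x - clamp (v x - t))
            - t * \sum_x (w x - p x).
    rewrite big_distrr -sumrB; apply: eq_bigr => x _; rewrite /p ffunE /=; ring.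
  rewrite hz.
  rewrite mulr0 subr0; apply: sumr_ge0 => x _; exact: clamp_var.
have pmin w : Pset w -> sqdist p v + sqdist w p <= sqdist w v.
  move=> Pw; rewrite (sqdist_split p w v); have := var w Pw; lra.
have ex : exists q : vec, Pset q /\ forall w, Pset w -> sqdist q v <= sqdist w v.
  exists p; split => // w Pw; have := pmin w Pw; have := sqdist_ge0 w p; lra.
have := epsilon_spec (inhabits v) _ ex; rewrite -/(proj v) => -[Pq qmin].
have eqp : proj v = p.
  have h1 := qmin p Pp; have h2 := pmin _ Pq.
  have h0 : sqdist (proj v) p = 0 by have := sqdist_ge0 (proj v) p; lra.
  apply/ffunP => x; have := @psumr_eq0P _ _ xpredT (fun y => (proj v y - p y) ^+ 2) (fun y _ => sqr_ge0 (proj v y - p y)) h0 x isT.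
  by move/eqP; rewrite sqrf_eq0 subr_eq0 => /eqP.
split => // w Pw; rewrite eqp sqdistC [sqdist v w]sqdistC.
have := pmin w Pw; have := sqdist_ge0 p v; lra.
Qed.

Local Notation gdi := (@gd R n m i).

Lemma gd_P L (obs : nat -> 'I_k) l : Pset (gdi L obs l).
Proof.
case: l => [|l] /=.
  split; first by move=> x; rewrite ffunE; lra.
  by rewrite (eq_bigr (fun _ => 1)) ?sumr_const ?card_ord // => x _; rewrite ffunE.
by case: (proj_spec [ffun x => gdi L obs l x - Num.sqrt (k%:R / L%:R) * unitv R (obs l) x]).
Qed.

Lemma ffE (f : 'I_k -> R) x : ([ffun y => f y] : vec) x = f x.
Proof. exact: ffunE. Qed.

Lemma sqdist_step (p q v : vec) (a : 'I_k) (e : R) :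
  (forall x, v x = p x - e * (x == a)%:R) ->
  sqdist v q = sqdist p q - 2 * e * (p a - q a) + e ^+ 2.
Proof.
move=> hv; rewrite /sqdist (bigD1 a) // [in RHS](bigD1 a) //.
have -> : \sum_(x | true && (x != a)) (v x - q x) ^+ 2 = \sum_(x | true && (x != a)) (p x - q x) ^+ 2.
  by apply: eq_bigr => x xa; rewrite hv (negbTE xa) /= mulr0 subr0.
rewrite hv eqxx /=.
set S := \sum_(x | _) _.
ring.
Qed.

Lemma ogd_sum L (obs : nat -> 'I_k) (q : vec) N : Pset q ->
  2 * Num.sqrt (k%:R / L%:R) * \sum_(l < N) (gdi L obs l (obs l) - q (obs l))
    <= sqdist (gdi L obs 0) q - sqdist (gdi L obs N) q + N%:R * Num.sqrt (k%:R / L%:R) ^+ 2.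
Proof.
move=> Pq; set e := Num.sqrt _; elim: N => [|N IH]; first by rewrite big_ord0 mulr0 subrr mul0r addr0.
rewrite big_ord_recr mulrDr.
have h1 := (proj_spec [ffun x => gdi L obs N x - e * unitv R (obs N) x]).2 q Pq.
rewrite (@sqdist_step (gdi L obs N) q [ffun x => gdi L obs N x - e * unitv R (obs N) x] (obs N) e) in h1; last first.
  by move=> x; rewrite /unitv !ffunE.
have h2 : gdi L obs N.+1 = proj [ffun x => gdi L obs N x - e * unitv R (obs N) x] by [].

rewrite -natr1 mulrDl mul1r; lra.
Qed.

Lemma ogd_bound (s : nat) (obs : nat -> 'I_k) (q : vec) : Pset q -> (0 < s)%N ->
  \sum_(l < s ^ 2) (gdi (s ^ 2) obs l (obs l) - q (obs l)) <= s%:R * k%:R.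
Proof.
move=> Pq s0; have := @ogd_sum (s ^ 2) obs q (s ^ 2) Pq.
set e := Num.sqrt _; set S := \sum_(l < _) _.
have hs : 0 < s%:R :> R by rewrite ltr0n.
have hk : 1 <= k%:R :> R by rewrite ler1n.
have e2 : e ^+ 2 = k%:R / (s ^ 2)%:R.
  by rewrite sqr_sqrtr // divr_ge0 // ler0n.
have es : (s%:R * e) ^+ 2 = k%:R by rewrite exprMn e2 natrX mulrC divfK // expf_neq0 // gt_eqF.
have e0 : 0 <= e by apply: sqrtr_ge0.
have es1 : 1 <= s%:R * e.
  rewrite leNgt; apply/negP => h.
  have : (s%:R * e) ^+ 2 < 1.
    rewrite -(expr1n R 2); apply: ltrXn2r => //; rewrite ?qualifE /=; nra.
  rewrite es; lra.
have d0 : sqdist (gdi (s ^ 2) obs 0) q <= k%:R.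
  have -> : k%:R = \sum_(x : 'I_k) (1 : R) by rewrite sumr_const card_ord.
  rewrite /sqdist; apply: ler_sum => x _.
  case: Pq => hq _; have := hq x; rewrite ffunE => /andP[h1 h2]; nra.
have d1 := sqdist_ge0 (gdi (s ^ 2) obs (s ^ 2)) q.
have Ne : (s ^ 2)%:R * e ^+ 2 = k%:R.
  by rewrite e2 mulrC divfK // natrX expf_neq0 // gt_eqF.
move=> h.
have heS : e * S <= k%:R by lra.
rewrite leNgt; apply/negP => hlt.
have : s%:R * k%:R * e < S * e by rewrite ltr_pM2r //; nra.
nra.
Qed.
End Proj.


Section Upd.
Variables (n : nat) (m : 'I_n -> nat).

Lemma upd_same (a : Prof m) i (x : 'I_(m i)) : upd a x i = x.
Proof. by rewrite /upd ffunE; case: eqP => // e; rewrite (eq_irrelevance e erefl). Qed.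

Lemma upd_other (a : Prof m) i (x : 'I_(m i)) j : i != j -> upd a x j = a j.
Proof. by move=> ij; rewrite /upd ffunE; case: eqP => // e; rewrite e eqxx in ij. Qed.

Lemma upd_id (a : Prof m) i : upd a (a i) = a.
Proof.
apply/ffunP => j; rewrite /upd ffunE; case: eqP => // e.
by subst j.
Qed.

Lemma upd_eq (a b : Prof m) i (x : 'I_(m i)) :
  (forall j, j != i -> a j = b j) -> upd a x = upd b x.
Proof.
move=> h; apply/ffunP => j; rewrite /upd !ffunE; case: eqP => // e.
by apply: h; apply/eqP => ji; apply: e; rewrite ji.
Qed.
End Upd.

Lemma sum_blocks (R : realType) (f : nat -> R) (L r : nat) :
  \sum_(t < (r * L)%N) f t = \sum_(j < r) \sum_(l < L) f (j * L + l)%N.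
Proof.
elim: r => [|r IH]; first by rewrite mul0n !big_ord0.
rewrite big_ord_recr /= -IH -(big_mkord xpredT f) -(big_mkord xpredT (fun l => f (r * L + l)%N)) -(big_mkord xpredT f) mulSn addnC.
rewrite (big_cat_nat (n := r * L)) ?leq_addr //=; congr (_ + _).
rewrite -{1}(add0n (r * L)%N) big_addn addKn.
by apply: eq_bigr => l _; rewrite addnC.
Qed.

Lemma sum_reindex (R : realType) (T : finType) (G : nat -> R) (r : nat) :
  (r <= #|T|)%N ->
  \sum_(j < r) G j = \sum_(x : T | (enum_rank x < r)%N) G (enum_rank x).
Proof.
move=> hr; rewrite (big_ord_widen _ _ hr).
rewrite (reindex (@enum_rank T)) //=.
by apply: onW_bij; exact: enum_rank_bij.
Qed.

Section Game.
Variables (R : realType) (n : nat) (m : 'I_n -> nat).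
Hypothesis hm : forall i, (2 <= m i)%N.
Variables (U : 'I_n -> Prof m -> R) (act : nat -> Prof m) (C : R) (s : nat).
Hypothesis hU : forall i a, 0 <= U i a <= 1.
Hypothesis hs : (0 < s)%N.
Local Notation L := (s ^ 2)%N.
Hypothesis hNR : no_regret U L act C.
Hypothesis hC : 0 <= C.

Local Notation N := #|{: Ph m}|.
Local Notation T := (horizon m L).

Lemma L_gt0 : (0 < L)%N. Proof. by rewrite expn_gt0 hs. Qed.

Definition tau (ph : Ph m) (l : nat) : nat := (enum_rank ph * L + l)%N.

Lemma phase_at_tau ph l : (l < L)%N -> phase_at m L (tau ph l) = Some ph.
Proof.
move=> hl; rewrite /phase_at /tau divnMDl ?L_gt0 // divn_small // addn0.
rewrite (nth_map ph) ?size_enum_ord ?cardE ?ltn_ord //.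
  by rewrite nth_enum_rank.
by rewrite -cardE ltn_ord.
Qed.

Lemma mod_tau ph l : (l < L)%N -> (tau ph l %% L = l)%N.
Proof. by move=> hl; rewrite /tau modnMDl modn_small. Qed.


Lemma pay_other t ph j (z : 'I_(m j)) :
  phase_at m L t = Some ph -> j != (val ph).1 ->
  pay R L act t z = if z == (val ph).2 j then 2 else 0.
Proof.
by move=> hp hj; rewrite /pay hp; case: eqP => // e; rewrite e eqxx in hj.
Qed.

Lemma signal_some t j y : signal m L t j = Some y ->
  exists ph, [/\ phase_at m L t = Some ph, j != (val ph).1 & (val ph).2 j = y].
Proof.
rewrite /signal; case: (phase_at m L t) => [ph|//].
by case: ifP => // hj [<-]; exists ph; rewrite hj.
Qed.

Lemma signal_tau ph l j : (l < L)%N ->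
  signal m L (tau ph l) j = if j == (val ph).1 then None else Some ((val ph).2 j).
Proof. by move=> hl; rewrite /signal phase_at_tau. Qed.

Lemma miss_bound j (y : 'I_(m j)) :
  \sum_(t < T | signal m L t j == Some y) ((act t j != y)%:R : R) <= C * Num.sqrt T%:R.
Proof.
have h0 := (hNR (Some y) (leqnn T) y).
apply: le_trans h0.
apply: ler_sum => t /eqP hsig.
have [ph [hp hj hy]] := signal_some hsig.
rewrite /util upd_same !(pay_other _ hp hj) hy eqxx.
case: eqP => [e|ne].
  by rewrite -e upd_id /=; lra.
have /andP[h1 h2] := hU j (upd (act t) y); have /andP[h3 h4] := hU j (act t).
rewrite /=; lra.
Qed.


Section Agent.
Variable i : 'I_n.
Local Notation k := (m i).
Lemma k_gt0 : (0 < k)%N. Proof. by apply: leq_trans (hm i). Qed.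

Definition gx (x : 'I_k) t :=
  util U L act t i (upd (act t) x) - util U L act t i (act t).
Definition D ph x := \sum_(l < L) gx x (tau ph l).
Definition uu (ph : Ph m) (x : 'I_k) := U i (upd (val ph).2 x).
Definition cc ph := 1 + (\sum_y uu ph y) / k%:R.
Definition F ph x :=
  \sum_(l < L) (uu ph x + pay R L act (tau ph l) x) - L%:R * cc ph.
Definition bad ph l : bool :=
  ~~ [forall j, (j != i) ==> (act (tau ph l) j == (val ph).2 j)].
Definition B ph : R := \sum_(l < L) (bad ph l)%:R.

Definition Ph_of (b : Prof m) (hb : val (b i) == 0%N) : Ph m := exist _ (i, b) hb.

Lemma pr_gd (b : Prof m) (hb : val (b i) == 0%N) l (x : 'I_k) : (l < L)%N ->
  pay R L act (tau (Ph_of hb) l) x =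
  gd R L (fun l' => act (tau (Ph_of hb) l') i) l x.
Proof.
move=> hl; rewrite /pay phase_at_tau //; case: eqP => // e.
by rewrite (eq_irrelevance e erefl) mod_tau.
Qed.


Lemma gx_ge ph l x :
  uu ph x + pay R L act (tau ph l) x - uu ph (act (tau ph l) i)
    - pay R L act (tau ph l) (act (tau ph l) i) - 2 * (bad ph l)%:R
  <= gx x (tau ph l).
Proof.
rewrite /gx /util upd_same /uu; set a := act (tau ph l).
case hb: (bad ph l).
  have /andP[h1 h2] := hU i (upd a x); have /andP[h3 h4] := hU i a.
  have /andP[h5 h6] := hU i (upd (val ph).2 x).
  have /andP[h7 h8] := hU i (upd (val ph).2 (a i)).
  rewrite /=; lra.
move/negbFE: hb => /forallP hb.
have ab j : j != i -> a j = (val ph).2 j by move=> ji; apply/eqP; exact: (implyP (hb j) ji).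
rewrite (upd_eq x ab) -{3}(upd_id a i) (upd_eq (a i) ab) /=; lra.
Qed.


Lemma uu_sum_bnd ph : 0 <= \sum_y uu ph y <= k%:R.
Proof.
apply/andP; split; first by apply: sumr_ge0 => y _; case/andP: (hU i (upd (val ph).2 y)).
have -> : k%:R = \sum_(y : 'I_k) (1 : R) by rewrite sumr_const card_ord.
by apply: ler_sum => y _; case/andP: (hU i (upd (val ph).2 y)).
Qed.

Definition qv ph : {ffun 'I_k -> R} := [ffun y => cc ph - uu ph y].

Lemma qv_P ph : Pset (qv ph).
Proof.
have hk : 0 < k%:R :> R by rewrite ltr0n k_gt0.
have [h0 h1] := andP (uu_sum_bnd ph).
have ha : 0 <= (\sum_y uu ph y) / k%:R <= 1.
  by rewrite divr_ge0 ?ler0n //= ler_pdivrMr // mul1r.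
split.
  move=> y; rewrite ffunE /cc; have /andP[h2 h3] := hU i (upd (val ph).2 y).
  rewrite /uu; lra.
rewrite /qv (eq_bigr (fun y => cc ph - uu ph y)); last by move=> y _; rewrite ffunE.
rewrite sumrB sumr_const card_ord /cc mulrnDl.
rewrite -(mulr_natr (_ / _)) divfK ?gt_eqF //; lra.
Qed.

Lemma D_ge (b : Prof m) (hb : val (b i) == 0%N) x :
  F (Ph_of hb) x - s%:R * k%:R - 2 * B (Ph_of hb) <= D (Ph_of hb) x.
Proof.
set ph := Ph_of hb.
pose obs := fun l' => act (tau ph l') i.
have ogd := ogd_bound k_gt0 obs (qv_P ph) hs.
rewrite (eq_bigr (fun l : 'I_L => pay R L act (tau ph l) (obs l) - qv ph (obs l))) in ogd;
  last by move=> l _; rewrite pr_gd.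
have hD := @ler_sum _ _ (index_enum 'I_L) xpredT _ _ (fun (l : 'I_L) _ => gx_ge ph l x).
rewrite /D; apply: le_trans hD.
have e1 : L%:R * cc ph = \sum_(l < L) (qv ph (obs l) + uu ph (obs l)).
  have -> : L%:R * cc ph = \sum_(l < L) cc ph by rewrite sumr_const card_ord mulr_natl.
  by apply: eq_bigr => l _; rewrite ffunE subrK.
rewrite /F e1 /B mulr_sumr.
have : \sum_(l < L) (uu ph x + pay R L act (tau ph l) x)
   - \sum_(l < L) (qv ph (obs l) + uu ph (obs l))
   - \sum_(l < L) (pay R L act (tau ph l) (obs l) - qv ph (obs l))
   - \sum_(l < L) 2 * (bad ph l)%:R
   = \sum_(l < L) (uu ph x + pay R L act (tau ph l) x - uu ph (obs l)
        - pay R L act (tau ph l) (obs l) - 2 * (bad ph l)%:R).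
  rewrite -!sumrB; apply: eq_bigr => l _; ring.
lra.
Qed.


Lemma sumF0 (b : Prof m) (hb : val (b i) == 0%N) : \sum_x F (Ph_of hb) x = 0.
Proof.
set ph := Ph_of hb.
have hk : k%:R != 0 :> R by rewrite pnatr_eq0 -lt0n k_gt0.
have hp l : (l < L)%N -> \sum_(x : 'I_k) pay R L act (tau ph l) x = k%:R.
  move=> hl; under eq_bigr => x _ do rewrite (pr_gd hb x hl).
  by case: (gd_P R k_gt0 L (fun l' => act (tau ph l') i) l).
rewrite /F sumrB [X in X - _]exchange_big.
rewrite (eq_bigr (fun l : 'I_L => \sum_y uu ph y + k%:R)); last first.
  by move=> l _; rewrite big_split hp.
set S := \sum_y uu ph y.
have e1 : \sum_(i0 < L) (S + k%:R) = L%:R * (S + k%:R) by rewrite sumr_const card_ord mulr_natl.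
have e2 : \sum_(y : 'I_k) L%:R * cc ph = k%:R * (L%:R * cc ph) by rewrite sumr_const card_ord [RHS]mulr_natl.
rewrite e1 e2 /cc -/S.
by field.
Qed.


Lemma regret_decomp r x : (r <= N)%N ->
  \sum_(t < (r * L)%N | signal m L t i == None) gx x t =
  \sum_(ph : Ph m | (enum_rank ph < r)%N && ((val ph).1 == i)) D ph x.
Proof.
move=> hr.
pose h t := if signal m L t i == None then gx x t else 0.
transitivity (\sum_(j < r) \sum_(l < L) h (j * L + l)%N).
  rewrite big_mkcond; exact: sum_blocks.
rewrite (sum_reindex (fun j => \sum_(l < L) h (j * L + l)%N) hr) big_mkcondr.
apply: eq_bigr => ph _; rewrite /D.
case: eqP => [e|ne].
  by apply: eq_bigr => l _; rewrite /h -/(tau ph l) signal_tau // e eqxx.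
rewrite big1 // => l _; rewrite /h -/(tau ph l) signal_tau //.
by case: (i =P (val ph).1) => [e|_] //; case: ne; rewrite e.
Qed.


End Agent.

Definition miss j t : bool :=
  if signal m L t j is Some y then act t j != y else false.

Lemma miss_total j : \sum_(t < T) ((miss j t)%:R : R) <= (m j)%:R * (C * Num.sqrt T%:R).
Proof.
have e t : ((miss j t)%:R : R) =
    \sum_(y : 'I_(m j)) ((signal m L t j == Some y)%:R * (act t j != y)%:R).
  rewrite /miss; case: (signal m L t j) => [y0|].
    rewrite (bigD1 y0) //= eqxx mul1r big1 ?addr0 // => y hy.
    by case: eqP => [[e]|_]; [rewrite e eqxx in hy | rewrite mul0r].
  by rewrite big1 // => y _ /=; rewrite mul0r.
under eq_bigr => t _ do rewrite e.
rewrite exchange_big /=.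
have -> : (m j)%:R * (C * Num.sqrt T%:R) = \sum_(y : 'I_(m j)) (C * Num.sqrt T%:R).
  by rewrite sumr_const card_ord [LHS]mulr_natl.
apply: ler_sum => y _; apply: le_trans (miss_bound y).
by rewrite [X in _ <= X]big_mkcond; apply: ler_sum => t _; case: eqP => _; rewrite ?mul1r ?mul0r.
Qed.

Section Agent2.
Variable i : 'I_n.

Lemma bad_miss ph l : (val ph).1 = i -> (l < L)%N ->
  ((bad i ph l)%:R : R) <= \sum_j ((miss j (tau ph l))%:R : R).
Proof.
move=> hi hl; rewrite /bad; case: forallP => [_|nf] /=.
  by rewrite mulr0n; apply: sumr_ge0 => j _; rewrite ler0n.
have [j hj] : exists j, ~~ ((j != i) ==> (act (tau ph l) j == (val ph).2 j)).
  by apply/existsP; rewrite -negb_forall; apply/forallP.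
move: hj; rewrite negb_imply => /andP[ji hne].
rewrite (bigD1 j) //= /miss signal_tau // hi (negbTE ji) hne /=.
by rewrite lerDl; apply: sumr_ge0 => j' _; rewrite ler0n.
Qed.

Lemma B_total r : (r <= N)%N ->
  \sum_(ph : Ph m | (enum_rank ph < r)%N && ((val ph).1 == i)) B i ph
    <= (\sum_j (m j))%:R * (C * Num.sqrt T%:R).
Proof.
move=> hr.
apply: le_trans (_ : \sum_(ph : Ph m) \sum_(l < L) \sum_j ((miss j (tau ph l))%:R : R) <= _).
  apply: le_trans (_ : \sum_(ph : Ph m | (enum_rank ph < r)%N && ((val ph).1 == i))
                        \sum_(l < L) \sum_j ((miss j (tau ph l))%:R : R) <= _).
    apply: ler_sum => ph /andP[_ /eqP hi]; apply: ler_sum => l _; exact: bad_miss.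
  rewrite [X in _ <= X](bigID (fun ph : Ph m => (enum_rank ph < r)%N && ((val ph).1 == i))) /=.
  by rewrite lerDl; apply: sumr_ge0 => ph _; apply: sumr_ge0 => l _; apply: sumr_ge0 => j _; rewrite ler0n.
have e1 : \sum_(ph : Ph m) \sum_(l < L) \sum_j ((miss j (tau ph l))%:R : R)
        = \sum_(t < T) \sum_j ((miss j t)%:R : R).
  symmetry; transitivity (\sum_(j' < N) \sum_(l < L) (fun t => \sum_j ((miss j t)%:R : R)) (j' * L + l)%N).
    rewrite /horizon; exact: (sum_blocks (fun t => \sum_j ((miss j t)%:R : R)) L N).
  rewrite (sum_reindex (fun j' => \sum_(l < L) (fun t => \sum_j ((miss j t)%:R : R)) (j' * L + l)%N) (leqnn N)).
  by apply: eq_bigl => ph; rewrite ltn_ord.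
rewrite e1 exchange_big /= natr_sum mulr_suml; apply: ler_sum => j _; exact: miss_total.
Qed.


Local Notation k := (m i).

Lemma D_ge' ph (x : 'I_k) : (val ph).1 = i -> F ph x - s%:R * k%:R - 2 * B i ph <= D ph x.
Proof. by case: ph => [[i0 b] hb] /= e; subst i0; exact: D_ge. Qed.

Lemma sumF0' ph : (val ph).1 = i -> \sum_(x : 'I_k) F ph x = 0.
Proof. by case: ph => [[i0 b] hb] /= e; subst i0; exact: sumF0. Qed.

Definition Gam := C * Num.sqrt T%:R + N%:R * (s%:R * k%:R)
                  + 2 * ((\sum_j (m j))%:R * (C * Num.sqrt T%:R)).

Definition Phi r (x : 'I_k) :=
  \sum_(ph : Ph m | (enum_rank ph < r)%N && ((val ph).1 == i)) F ph x.

Lemma Phi_bound r (x : 'I_k) : (r <= N)%N -> Phi r x <= Gam.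
Proof.
move=> hr; rewrite /Phi.
apply: le_trans (_ : \sum_(ph : Ph m | (enum_rank ph < r)%N && ((val ph).1 == i))
    (D ph x + s%:R * k%:R + 2 * B i ph) <= _).
  apply: ler_sum => ph /andP[_ /eqP hi]; have := D_ge' x hi; lra.
rewrite !big_split /= /Gam.
have h1 : \sum_(ph : Ph m | (enum_rank ph < r)%N && ((val ph).1 == i)) D ph x
          <= C * Num.sqrt T%:R.
  rewrite -regret_decomp //.
  have hrT : (r * L <= T)%N by rewrite /horizon leq_mul2r hr orbT.
  exact: (hNR None hrT x).
have h2 : \sum_(ph : Ph m | (enum_rank ph < r)%N && ((val ph).1 == i)) (s%:R * k%:R : R)
          <= N%:R * (s%:R * k%:R).
  have h2a : \sum_(ph : Ph m | (enum_rank ph < r)%N && ((val ph).1 == i)) (s%:R * k%:R : R)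
             <= \sum_(ph : Ph m) (s%:R * k%:R : R).
    rewrite [X in _ <= X](bigID (fun ph : Ph m => (enum_rank ph < r)%N && ((val ph).1 == i))) /=.
    by rewrite lerDl; apply: sumr_ge0 => ph _; rewrite mulr_ge0 ?ler0n.
  have h2b : \sum_(ph : Ph m) s%:R * k%:R = N%:R * (s%:R * k%:R) :> R.
    by rewrite sumr_const [RHS]mulr_natl.
  lra.
have h3 := B_total hr.
apply: lerD; first apply: lerD.
- exact: h1.
- exact: h2.
- rewrite -mulr_sumr; apply: ler_wpM2l => //; exact: h3.
Qed.


Lemma sum0_lb (f : 'I_k -> R) (g : R) x :
  (forall y, f y <= g) -> \sum_y f y = 0 -> 0 <= g -> - (k%:R * g) <= f x.
Proof.
move=> hf h0 hg.
have A : \sum_y f y = f x + \sum_(y | y != x) f y by rewrite (bigD1 x).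
have B' : \sum_(y : 'I_k) g = g + \sum_(y | y != x) g by rewrite (bigD1 x).
have C' : \sum_(y | y != x) f y <= \sum_(y | y != x) g by apply: ler_sum => y _.
have D' : \sum_(y : 'I_k) g = k%:R * g by rewrite sumr_const card_ord mulr_natl.
lra.
Qed.

Lemma Gam_ge0 : 0 <= Gam.
Proof.
rewrite /Gam; have h1 : 0 <= Num.sqrt (T%:R : R) by apply: sqrtr_ge0.
apply: addr_ge0; first apply: addr_ge0.
- exact: mulr_ge0.
- by rewrite !mulr_ge0 ?ler0n.
- by rewrite !mulr_ge0 ?ler0n.
Qed.

Lemma F_bound ph0 (x : 'I_k) : (val ph0).1 = i -> `|F ph0 x| <= (k%:R + 1) * Gam.
Proof.
move=> hi.
set r := nat_of_ord (enum_rank ph0).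
have hr : (r < N)%N by rewrite /r ltn_ord.
have split : Phi r.+1 x = F ph0 x + Phi r x.
  rewrite /Phi (bigD1 ph0) /=; last by rewrite ltnSn hi eqxx.
  congr (_ + _); apply: eq_bigl => ph.
  case: (ph =P ph0) => [->|ne]; first by rewrite ltnn /= andbF.
  rewrite andbT ltnS leq_eqVlt.
  have -> : (nat_of_ord (enum_rank ph) == r) = false.
    apply/negbTE/negP => /eqP e; apply: ne; apply: enum_rank_inj; exact: val_inj.
  by [].
have lb r' : (r' <= N)%N -> - (k%:R * Gam) <= Phi r' x.
  move=> hr'; apply: sum0_lb => //; last exact: Gam_ge0.
  - by move=> y; exact: Phi_bound.
  - rewrite /Phi exchange_big /=; apply: big1 => ph /andP[_ /eqP e]; exact: sumF0'.
have u1 := Phi_bound x (ltnW hr); have u2 := Phi_bound x hr.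
have l1 := lb _ (ltnW hr); have l2 := lb _ hr.
rewrite ler_norml; apply/andP; split; lra.
Qed.

End Agent2.

Definition W (i : 'I_n) (a : Prof m) : R :=
  match [pick ph : Ph m | ((val ph).1 == i) &&
                        [forall j, (j != i) ==> ((val ph).2 j == a j)]] with
  | Some ph => - cc i ph
  | None => 0
  end.

Lemma W_dep i (a a' : Prof m) : (forall j, j != i -> a j = a' j) -> W i a = W i a'.
Proof.
move=> h; rewrite /W; congr (match _ with Some ph => _ | None => _ end).
apply: eq_pick => ph; congr (_ && _); apply: eq_forallb => j.
by case: (boolP (j != i)) => // ji; rewrite (h j ji).
Qed.

Lemma out_bound i (a : Prof m) :
  `|U i a + W i a - output R L act i a| <= ((m i)%:R + 1) * Gam i / L%:R.
Proof.
have hL : 0 < L%:R :> R by rewrite ltr0n L_gt0.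
rewrite /output /W; case: pickP => [ph /andP[/eqP hi /forallP hall] | none]; last first.
  exfalso; pose x0 : 'I_(m i) := Ordinal (k_gt0 i).
  have hb : val (upd a x0 i) == 0%N by rewrite upd_same.
  have := none (Ph_of hb); rewrite /= eqxx /=.
  suff -> : [forall j, (j != i) ==> (upd a x0 j == a j)] by [].
  apply/forallP => j; apply/implyP => ji; rewrite upd_other //; by rewrite eq_sym.
move: ph hi hall => [[i0 b] hb] /= hi hall; subst i0.
case: eqP => // e; rewrite (eq_irrelevance e erefl) /=.
have ep (l : 'I_L) : pvec R L act (Ph_of hb) l (a i) = pay R L act (tau (Ph_of hb) l) (a i).
  by rewrite pr_gd.
have hba j : j != i -> b j = a j by move=> ji; apply/eqP; exact: (implyP (hall j) ji).
have hu : uu (Ph_of hb) (a i) = U i a by rewrite /uu /= (upd_eq _ hba) upd_id.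
have Fb := F_bound (a i) (erefl : (val (Ph_of hb)).1 = i).
rewrite (_ : U i a - cc i _ - _ = F (Ph_of hb) (a i) / L%:R); last first.
  rewrite /F big_split /= sumr_const card_ord hu.
  under eq_bigr => l _ do rewrite ep.
  field; by rewrite pnatr_eq0 -lt0n hs.
rewrite normrM [`|L%:R^-1|]ger0_norm ?invr_ge0 ?ler0n //.
by apply: ler_wpM2r; rewrite ?invr_ge0 ?ler0n.
Qed.

End Game.


Section Nat.
Variables (n : nat) (m : 'I_n -> nat).
Hypothesis hm : forall i, (2 <= m i)%N.

Lemma M_ge1 : (1 <= Mprod m)%N.
Proof. by rewrite /Mprod prodn_gt0 // => i; apply: leq_trans (hm i). Qed.

Lemma mi_leM i : (m i <= Mprod m)%N.
Proof.
rewrite /Mprod (bigD1 i) //= leq_pmulr // prodn_gt0 // => j.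
by apply: leq_trans (hm j).
Qed.

Lemma n_leM : (n <= Mprod m)%N.
Proof.
apply: leq_trans (ltnW (ltn_expl n (ltnSn 1))) _.
have -> : (2 ^ n = \prod_(i < n) 2)%N by rewrite prod_nat_const card_ord.
by apply: leq_prod => i _; exact: hm.
Qed.

Lemma summ_le : (\sum_j m j <= n * Mprod m)%N.
Proof.
apply: leq_trans (_ : \sum_(j < n) Mprod m <= _)%N.
  by apply: leq_sum => j _; exact: mi_leM.
by rewrite sum_nat_const card_ord.
Qed.

Lemma card_Prof : #|{: Prof m}| = Mprod m.
Proof.
rewrite /Prof card_dep_ffun foldrE big_map big_enum /Mprod /=.
by apply: eq_bigr => i _; rewrite card_ord.
Qed.

Lemma N_le : (#|{: Ph m}| <= n * Mprod m)%N.
Proof.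
rewrite /Ph card_sig; apply: leq_trans (max_card _) _.
by rewrite card_prod card_ord card_Prof.
Qed.
End Nat.

Lemma sqrt_T_le (R : realType) (N s : nat) :
  Num.sqrt ((N * s ^ 2)%N%:R : R) <= N%:R * s%:R.
Proof.
have h : ((N * s ^ 2)%N <= (N * s) ^ 2)%N.
  case: N => [|N'] //; rewrite expnMn leq_mul2r; apply/orP; right.
  by rewrite expnS expn1 leq_pmull.
have -> : N%:R * s%:R = Num.sqrt (((N * s) ^ 2)%N%:R : R).
  by rewrite natrX natrM sqrtr_sqr ger0_norm // mulr_ge0 ?ler0n.
by rewrite ler_sqrt ?ler0n // ler_nat.
Qed.

Lemma exp_arith c : (2 * c + 12 = 2 + (c + 5) * 2)%N.
Proof. lia. Qed.

Unset Implicit Arguments.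
Set Strict Implicit.

Theorem theorem5p4 (R : realType) (c0 : R) (c : nat) :
  exists (K : R) (d : nat),
  forall (n : nat) (m : 'I_n -> nat), (forall i, 2 <= m i)%N ->
  forall C eps : R, 0 <= C -> C <= c0 * (Mprod m)%:R ^+ c ->
  0 < eps -> eps <= 1 ->
  exists L : nat, (0 < L)%N /\
    (horizon m L)%:R <= K * (Mprod m)%:R ^+ d / eps ^+ 2 /\
    forall (U : 'I_n -> Prof m -> R) (act : nat -> Prof m),
      (forall i a, 0 <= U i a <= 1) ->
      no_regret U L act C ->
      eps_learns eps U (output R L act).
Proof.
set c1 := `|c0|.
have c10 : 0 <= c1 by apply: normr_ge0.
exists (16 * (3 * c1 + 1) ^+ 2), (2 * c + 12)%N.
move=> n m hm C eps hC0 hC he0 he1.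
set M := Mprod m.
set X : R := M%:R.
have hX : 1 <= X by rewrite /X ler1n M_ge1.
have hY : 1 <= X ^+ c by apply: exprn_ege1.
have hC1 : C <= c1 * X ^+ c.
  apply: le_trans hC _; apply: ler_wpM2r; first by apply: exprn_ge0; lra.
  exact: ler_norm.
set B := 2 * (3 * c1 + 1) * X ^+ (c + 5).
have hX5 : 1 <= X ^+ (c + 5) by apply: exprn_ege1.
have hB : 2 <= B by rewrite /B; nra.
have hBe : 0 <= B / eps by rewrite divr_ge0 //; lra.
set s := (Num.truncn (B / eps)).+1.
have hs : (0 < s)%N by [].
have s_gt : B / eps < s%:R by apply: truncnS_gt.
have s_le : s%:R <= B / eps + 1.
  by rewrite /s -natr1 lerD2r truncn_le hBe.
exists (s ^ 2)%N; split; first by rewrite expn_gt0.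
have hN : (#|{: Ph m}| <= M * M)%N.
  have h := N_le m; apply: (leq_trans h); rewrite leq_mul2r (n_leM hm); exact: orbT.
split.
  have h1 : (horizon m (s ^ 2))%:R <= X ^+ 2 * s%:R ^+ 2.
    rewrite /horizon /X -!natrX -natrM ler_nat expnS expn1.
    by rewrite leq_mul2r hN orbT.
  have h1e : 1 <= B / eps by rewrite ler_pdivlMr // mul1r; lra.
  have h2 : s%:R ^+ 2 <= (2 * B / eps) ^+ 2.
    have : s%:R <= 2 * B / eps by rewrite -mulrA; lra.
    have : 0 <= s%:R :> R by rewrite ler0n.
    nra.
  have h3 : X ^+ (2 * c + 12)%N = X ^+ 2 * (X ^+ (c + 5)%N) ^+ 2.
    have e := exp_arith c.
    by rewrite e exprD exprM.
  apply: le_trans h1 _; rewrite h3.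
  have -> : 16 * (3 * c1 + 1) ^+ 2 * (X ^+ 2 * X ^+ (c + 5) ^+ 2) / eps ^+ 2
          = X ^+ 2 * (2 * B / eps) ^+ 2.
    by rewrite /B; field; lra.
  apply: ler_wpM2l => //; apply: exprn_ge0; lra.
move=> U act hU hNR; exists (W U); split.
  by move=> i a a' h; exact: W_dep.
move=> i a; apply: le_trans (out_bound hm hU hs hNR hC0 i a) _.
rewrite /Gam /horizon.
set N := #|{: Ph m}|.
have hQ := sqrt_T_le R N s.
set Q := Num.sqrt _ in hQ *.
have hQ0 : 0 <= Q by apply: sqrtr_ge0.
set Nr : R := N%:R; set S : R := s%:R; set k : R := (m i)%:R.
set Sm : R := (\sum_j m j)%:R.
rewrite -/Nr -/S in hQ.
have hS : 1 <= S by rewrite /S ler1n.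
have hk : k <= X by rewrite /k /X ler_nat mi_leM.
have hk0 : 0 <= k by rewrite ler0n.
have hNr : Nr <= X ^+ 2 by rewrite /Nr /X -natrX ler_nat expnS expn1.
have hNr0 : 0 <= Nr by rewrite ler0n.
have hSm : Sm <= X ^+ 2.
  rewrite /Sm /X -natrX ler_nat expnS expn1.
  have h := summ_le hm; apply: (leq_trans h); rewrite leq_mul2r (n_leM hm); exact: orbT.
have hSm0 : 0 <= Sm by rewrite ler0n.
set Y := X ^+ c in hY hC1.
have hB' : B = 2 * (3 * c1 + 1) * (X ^+ 5 * Y) by rewrite /B exprD /Y [_ * X ^+ 5]mulrC.
set Z := C * (1 + 2 * Sm) + k.
have hZ : Z <= (3 * c1 + 1) * (X ^+ 2 * Y).
  have h1 : C * (1 + 2 * Sm) <= c1 * Y * (3 * X ^+ 2).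
    apply: ler_pM => //; first by lra.
    have : 1 <= X ^+ 2 by apply: exprn_ege1.
    lra.
  have h2 : k <= X ^+ 2 * Y.
    apply: le_trans hk _; have : X <= X ^+ 2 by apply: ler_eXnr.
    have : 0 <= X by lra.
    nra.
  rewrite /Z; lra.
have hA : (k + 1) * (Nr * Z) <= B.
  have hZ0 : 0 <= Z by rewrite /Z; apply: addr_ge0 => //; apply: mulr_ge0 => //; lra.
  have h1 : k + 1 <= 2 * X by lra.
  rewrite hB'.
  have -> : 2 * (3 * c1 + 1) * (X ^+ 5 * Y) = (2 * X) * (X ^+ 2 * ((3 * c1 + 1) * (X ^+ 2 * Y))).
    by rewrite !exprS expr0; ring.
  apply: ler_pM => //; first lra.
    by apply: mulr_ge0.
  by apply: ler_pM.
have hG : C * Q + Nr * (S * k) + 2 * (Sm * (C * Q)) <= S * (Nr * Z).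
  have h1 : C * Q <= C * (Nr * S) by apply: ler_wpM2l.
  have h2 : Sm * (C * Q) <= Sm * (C * (Nr * S)) by apply: ler_wpM2l.
  have -> : S * (Nr * Z) = C * (Nr * S) + Nr * (S * k) + 2 * (Sm * (C * (Nr * S))).
    by rewrite /Z; ring.
  lra.
have hS2 : (s ^ 2)%N%:R = S ^+ 2 by rewrite natrX.
rewrite hS2 ler_pdivrMr; last by apply: exprn_gt0; lra.
have hBS : B <= eps * S.
  by move: s_gt; rewrite ltr_pdivrMr // mulrC => /ltW.
apply: le_trans (_ : (k + 1) * (S * (Nr * Z)) <= _).
  by apply: ler_wpM2l => //; lra.
have : (k + 1) * (S * (Nr * Z)) = S * ((k + 1) * (Nr * Z)) by ring.
move=> ->.
have h1 : S * ((k + 1) * (Nr * Z)) <= S * B by apply: ler_wpM2l => //; lra.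
have h2 : S * B <= S * (eps * S) by apply: ler_wpM2l => //; lra.
have -> : eps * S ^+ 2 = S * (eps * S) by ring.
lra.
Qed.
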